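(* For every integer $n\ge 0$, \[ \int_{0}^{1}\frac{1-x}{x}\,{}_{H}w_{n+1}(-x)\,dx=(-1)^{n}\frac{n-1}{2}B_{n}. \] Moreover, for integers $n\ge 0$, $m\ge 1$ with $n+m$ even, \[ \int_{0}^{1}\frac{1-x}{x}\,{}_{H}w_{n+1}(-x)\,w_{m}(-x)\,dx=(-1)^{n}\frac{n}{2}B_{n+m}. \]
   Context: $\genfrac{\{}{\}}{0pt}{}{n}{k}$ denotes the Stirling numbers of the second kind. The geometric polynomials are $w_n(x)=\sum_{k=0}^{n}\genfrac{\{}{\}}{0pt}{}{n}{k}k!\,x^k$. With $H_k=\sum_{i=1}^k 1/i$, the harmonic geometric polynomials are ${}_{H}w_n(x)=\sum_{k=1}^{n}\genfrac{\{}{\}}{0pt}{}{n}{k}k!\,H_k\,x^k$. $B_n$ are the Bernoulli numbers, $\sum_{n\ge0}B_n t^n/n!=t/(e^t-1)$ (so $B_1=-1/2$). *)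

(* Defs.v *)
From Stdlib Require Import Reals List Factorial.
From Coquelicot Require Import Coquelicot.
Import ListNotations.
Open Scope R_scope.

Fixpoint stirling2 (n k : nat) : nat :=
  match n, k with
  | O, O => 1%nat
  | O, S _ => 0%nat
  | S _, O => 0%nat
  | S n', S k' => (S k' * stirling2 n' (S k') + stirling2 n' k')%nat
  end.

Definition harmonic (k : nat) : R := sum_n_m (fun i => / INR i) 1 k.

Definition geom_poly (n : nat) (x : R) : R :=
  sum_n_m (fun k => INR (stirling2 n k) * INR (fact k) * x ^ k) 0 n.

Definition harm_geom_poly (n : nat) (x : R) : R :=
  sum_n_m (fun k => INR (stirling2 n k) * INR (fact k) * harmonic k * x ^ k) 1 n.

(* Bernoulli numbers with B_1 = -1/2, i.e. t/(e^t-1) = sum B_n t^n/n!,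
   computed by the equivalent recurrence B_0 = 1,
   sum_{k=0}^{n} C(n+1,k) B_k = 0 for n >= 1.
   bern_list n = [B_0; ...; B_n]. *)
Fixpoint bern_list (n : nat) : list R :=
  match n with
  | O => [1]
  | S m =>
      let l := bern_list m in
      l ++ [ - / INR (S n) *
             sum_n_m (fun k => Binomial.C (S n) k * nth k l 0) 0 m ]
  end.

Definition bernoulli (n : nat) : R := nth n (bern_list n) 0.

Example bern1 : bernoulli 1 = - / 2.
Proof. unfold bernoulli; simpl. rewrite sum_n_n. unfold Binomial.C; simpl. field. Qed.

(* Main.v *)
Require Import Defs.
From Stdlib Require Import Reals Arith.
From Coquelicot Require Import Coquelicot.
Open Scope R_scope.

From Stdlib Require List Lra.
From HB Require structures.
From mathcomp Require all_boot all_algebra.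
From mathcomp Require Rstruct ring zify.

Module Dev.
Import List Lra.
Import structures.
Import all_boot all_algebra.
Import Rstruct ring zify.
Import GRing.Theory Num.Theory.
Local Open Scope ring_scope.

Definition r : {poly R} := 1 - 'X.
Fixpoint Wp (n : nat) : {poly R} := if n is n'.+1 then 'X * (r * Wp n')^`() else 1.
Definition Wq n := (r * Wp n)^`().
Definition U n := Wp n \Po r.

Lemma rr : r \Po r = 'X.
Proof. by rewrite /r comp_polyB -polyC1 comp_polyC comp_polyX polyC1 opprB addrC subrK. Qed.
Lemma dr : r^`() = -1.
Proof. by rewrite /r derivB -polyC1 derivC derivX sub0r. Qed.

Lemma dXcomp p : ('X * (p \Po r))^`() = - ((r * p)^`() \Po r).
Proof. by rewrite -{1}rr -comp_polyM deriv_comp dr mulrN mulr1. Qed.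

Lemma Ucomp p : ('X * p) \Po r = r * (p \Po r).
Proof. by rewrite comp_polyM comp_polyX. Qed.

Lemma WpS n : Wp n.+1 = 'X * Wq n. Proof. by []. Qed.

Lemma derivCM (c : R) p : (c%:P * p)^`() = c%:P * p^`().
Proof. by rewrite derivM derivC mul0r add0r. Qed.

Definition sg n : {poly R} := ((-1) ^+ n)%:P.
Lemma sgS n : sg n.+1 = - sg n.
Proof. by rewrite /sg exprS mulN1r polyCN. Qed.
Lemma sg2 n : sg n * sg n = 1.
Proof. by rewrite /sg -polyCM -exprMn mulrNN mulr1 expr1n polyC1. Qed.

Lemma UC n : U n.+1 = sg n * (r * Wq n).
Proof.
elim: n => [|n IH].
  rewrite /U /= /Wq mulr1 Ucomp dr /sg expr0 polyC1 mul1r.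
  by rewrite -polyC1 -polyCN comp_polyC polyCN polyC1 mulrN mulr1.
rewrite /U WpS Ucomp.
have -> : Wq n.+1 \Po r = - ('X * U n.+1)^`().
  by rewrite /U dXcomp opprK.
rewrite IH.
have -> : 'X * (sg n * (r * Wq n)) = sg n * (r * Wp n.+1) by rewrite WpS; ring.
by rewrite derivCM sgS -/(Wq n.+1); ring.
Qed.

Fixpoint HWp (n : nat) : {poly R} :=
  if n is n'.+1 then 'X * ((r * HWp n')^`() - Wp n') else 0.
Definition Hq n := (r * HWp n)^`() - Wp n.
Definition V n := HWp n \Po r.
Lemma HWpS n : HWp n.+1 = 'X * Hq n. Proof. by []. Qed.

Lemma derivcM (c p : {poly R}) : c^`() = 0 -> (c * p)^`() = c * p^`().
Proof. by move=> h; rewrite derivM h mul0r add0r. Qed.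
Lemma dsg n : (sg n)^`() = 0. Proof. by rewrite derivC. Qed.
Lemma dnat n : (n%:R : {poly R})^`() = 0.
Proof. by rewrite -polyC_natr derivC. Qed.
Lemma dsgn n : (sg n * n%:R)^`() = 0.
Proof. by rewrite derivcM ?dsg // dnat mulr0. Qed.

Lemma BB n : sg n.+1 * V n.+1 + r * Hq n = sg n * n%:R * U n.
Proof.
elim: n => [|n IH].
  rewrite /V /Hq /= !mulr0 deriv0 sub0r Ucomp -polyC1 -polyCN comp_polyC.
  rewrite /sg expr1 !polyCN polyC1; ring.
have E := congr1 (fun p => r * ('X * p)^`()) IH. simpl in E.
have e1 : 'X * (sg n.+1 * V n.+1 + r * Hq n) = sg n.+1 * ('X * V n.+1) + r * ('X * Hq n) by ring.
have e2 : 'X * (sg n * n%:R * U n) = (sg n * n%:R) * ('X * U n) by ring.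
rewrite e1 e2 derivD (@derivcM (sg n.+1) ('X * V n.+1) (dsg n.+1)) (@derivcM (sg n * n%:R) ('X * U n) (dsgn n)) in E.
have e3 : ('X * U n)^`() = - (Wq n \Po r) by rewrite /U dXcomp.
have e4 : U n.+1 = r * (Wq n \Po r) by rewrite /U WpS Ucomp.
have e5 := UC n.
have eV : V n.+2 = r * (- ('X * V n.+1)^`() - U n.+1).
  rewrite /V HWpS Ucomp /Hq comp_polyB.
  by rewrite -[((r * HWp n.+1)^`() \Po r)]opprK -dXcomp.
have eH : Hq n.+1 = (r * ('X * Hq n))^`() - 'X * Wq n by rewrite /Hq HWpS WpS.
rewrite e3 in E; rewrite eV eH.
rewrite !sgS opprK; rewrite sgS in E.
move: E e4 e5 (sg2 n).
set A := ('X * V n.+1)^`(); set Bq := (r * ('X * Hq n))^`(); set C := Wq n \Po r.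
set Uq := U n.+1; set Wn := Wq n; set s := sg n.
move=> E e4 e5 e6.
apply/eqP; rewrite -subr_eq0; apply/eqP.
transitivity ((r * (- s * A + Bq) - r * (s * n%:R * - C)) + s * n%:R * (Uq - r * C)
   + s * 'X * (Uq - s * (r * Wn)) + 'X * r * Wn * (s * s - 1)).
  rewrite /r -natr1; ring.
by rewrite E -e4 -e5 e6 !subrr !mulr0 !addr0.
Qed.

Lemma is_derive_horner (p : {poly R}) x : is_derive (fun y => p.[y]) x (p^`()).[x].
Proof.
elim/poly_ind: p x => [|p c IH] x.
  rewrite deriv0 horner0.
  apply: (@is_derive_ext R_AbsRing R_NormedModule (fun _ => 0%R)) => [t|]; first by rewrite horner0.
  exact: is_derive_const.
suff -> : (p * 'X + c%:P)^`().[x] = Hierarchy.plus (Hierarchy.plus (Hierarchy.mult (p^`()).[x] x) (Hierarchy.mult p.[x] Hierarchy.one)) Hierarchy.zero.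
  apply: (@is_derive_ext R_AbsRing R_NormedModule (fun y => Hierarchy.plus (Hierarchy.mult p.[y] y) c)) => [t|].
    by rewrite hornerMXaddC.
  exact: (is_derive_plus _ _ x _ _ (is_derive_mult _ _ x _ _ (IH x) (is_derive_id x) Rmult_comm)
   (is_derive_const c x)).
rewrite derivMXaddC hornerD hornerM hornerX.
rewrite /Hierarchy.plus /Hierarchy.mult /Hierarchy.one /Hierarchy.zero /=.
by rewrite Rmult_1_r Rplus_0_r Rplus_comm.
Qed.

Definition iota (p : {poly R}) : R := RInt (fun x => p.[x]) 0 1.

Lemma iota_deriv p : iota (p^`()) = p.[1] - p.[0].
Proof.
apply: is_RInt_unique.
apply: (is_RInt_derive (fun x => p.[x])) => x _.
  exact: is_derive_horner.
apply: ex_derive_continuous; eexists; exact: is_derive_horner.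
Qed.

Definition prim (p : {poly R}) : {poly R} :=
  \poly_(i < (size p).+1) (if i is j.+1 then p`_j / j.+1%:R else 0).

Lemma primK p : (prim p)^`() = p.
Proof.
apply/polyP => i; rewrite coef_deriv coef_poly ltnS.
case: ltnP => hi.
  by rewrite -(mulr_natr (p`_i / i.+1%:R) i.+1) divfK // pnatr_eq0.
by rewrite mul0rn nth_default.
Qed.

Lemma iota_prim p : iota p = (prim p).[1] - (prim p).[0].
Proof. by rewrite -iota_deriv primK. Qed.

Lemma iotaD p q : iota (p + q) = iota p + iota q.
Proof.
rewrite -{1}(primK p) -{1}(primK q) -derivD iota_deriv !iota_prim !hornerD; ring.
Qed.

Lemma iotaCM c p : iota (c%:P * p) = c * iota p.
Proof.
rewrite -{1}(primK p) -derivCM iota_deriv !iota_prim !hornerM !hornerC; ring.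
Qed.

Lemma iotaN p : iota (- p) = - iota p.
Proof. by rewrite -mulN1r -polyC1 -polyCN iotaCM mulN1r. Qed.

Lemma iotaB p q : iota (p - q) = iota p - iota q.
Proof. by rewrite iotaD iotaN. Qed.

Lemma iota_comp p : iota (p \Po r) = iota p.
Proof.
have e : p \Po r = (- (prim p \Po r))^`().
  by rewrite derivN deriv_comp primK dr mulrN mulr1 opprK.
rewrite e iota_deriv iota_prim !hornerN !horner_comp /r !hornerD !hornerN !hornerX !hornerC.
rewrite subrr subr0; ring.
Qed.

Lemma hornerr0 : r.[1] = 0.
Proof. by rewrite /r hornerD hornerN hornerX hornerC subrr. Qed.

Definition b n := iota (Wp n).

Lemma Wp0 n : (Wp n.+1).[0] = 0.
Proof. by rewrite WpS hornerM hornerX mul0r. Qed.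
Lemma HWp0 n : (HWp n).[0] = 0.
Proof. by case: n => [|n]; rewrite ?horner0 // HWpS hornerM hornerX mul0r. Qed.

Lemma iotaQ0 Q : Q.[1] = 0 -> Q.[0] = 0 -> iota Q^`() = 0.
Proof. by move=> h1 h0; rewrite iota_deriv h1 h0 subrr. Qed.

Lemma XrQ1 (p : {poly R}) : ('X * p * r).[1] = 0.
Proof. by rewrite !hornerM hornerr0 mulr0. Qed.
Lemma XrQ0 (p : {poly R}) : ('X * p * r).[0] = 0.
Proof. by rewrite !hornerM hornerX mul0r mul0r. Qed.

Lemma UWq a : U a.+1 = r * (Wq a \Po r).
Proof. by rewrite /U WpS Ucomp. Qed.

Lemma dXU a : ('X * U a)^`() = - (Wq a \Po r).
Proof. by rewrite /U dXcomp. Qed.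

Lemma iota_Wq n : iota (Wq n) = - (Wp n).[0].
Proof. by rewrite /Wq iota_deriv !hornerM hornerr0 mul0r /r hornerD hornerN hornerX hornerC subr0 mul1r sub0r. Qed.

Lemma Jshift a c : iota (U a * Wp c.+1) = iota (U a.+1 * Wp c).
Proof.
apply/eqP; rewrite -subr_eq0 -iotaB; apply/eqP.
have h := iotaQ0 _ (XrQ1 (U a * Wp c)) (XrQ0 (U a * Wp c)).
rewrite -h; congr iota.
have -> : 'X * (U a * Wp c) * r = ('X * U a) * (r * Wp c) by ring.
rewrite derivM dXU -/(Wq c) UWq WpS; ring.
Qed.

Lemma Jval a c : iota (U a * Wp c) = b (a + c).
Proof.
elim: c a => [|c IH] a.
  by rewrite mulr1 addn0 iota_comp.
by rewrite Jshift IH addSnnS.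
Qed.


Lemma iota0 : iota 0 = 0.
Proof. by rewrite -(mul0r (0 : {poly R})) -polyC0 iotaCM mul0r. Qed.

Definition M a c := iota ('X * Wp a * U c).

Lemma Hshift a c : iota (HWp a.+1 * U c) = iota (HWp a * U c.+1) - M a c.
Proof.
have h := iotaQ0 _ (XrQ1 (U c * HWp a)) (XrQ0 (U c * HWp a)).
have e0 : 'X * (U c * HWp a) * r = ('X * U c) * (r * HWp a) by ring.
rewrite e0 in h.
rewrite derivM dXU in h.
have e : (r * HWp a)^`() = Hq a + Wp a by rewrite /Hq subrK.
rewrite e in h.
have e1 : - (Wq c \Po r) * (r * HWp a) + 'X * U c * (Hq a + Wp a)
   = HWp a.+1 * U c - HWp a * U c.+1 + 'X * Wp a * U c.
  rewrite HWpS UWq; ring.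
rewrite e1 in h.
rewrite iotaD iotaB in h.
rewrite /M; apply/eqP; rewrite -subr_eq0; apply/eqP; rewrite -h; ring.
Qed.

Lemma Hsum a c : iota (HWp a * U c) = - \sum_(i < a) M i (a - i.+1 + c).
Proof.
elim: a c => [|a IH] c.
  by rewrite /= mul0r iota0 big_ord0 oppr0.
rewrite Hshift IH big_ord_recr /= subnn add0n opprD.
congr (- _ - _); apply: eq_bigr => i _.
have hi := ltn_ord i.
congr (M _ _); lia.
Qed.

Lemma Msym a c : M a c + M c a = b (a + c).
Proof.
rewrite /M -Jval.
rewrite -[iota ('X * Wp a * U c)]iota_comp !comp_polyM comp_polyX.
have -> : U c \Po r = Wp c by rewrite /U -comp_polyA rr comp_polyXr.
rewrite -/(U a).
have -> : r * U a * Wp c = U a * Wp c - 'X * Wp c * U a by rewrite /r; ring.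
rewrite iotaB; ring.
Qed.

Lemma Rval N : 2%:R * iota (HWp N.+1) = - (N.+1%:R * b N).
Proof.
rewrite -[HWp N.+1]mulr1.
have -> : (1 : {poly R}) = U 0 by rewrite /U /= -polyC1 comp_polyC.
rewrite Hsum.
set S := \sum_(i < N.+1) _.
have e1 : S = \sum_(i < N.+1) M (N - i) i.
  rewrite /S (reindex_inj rev_ord_inj) /=; apply: eq_bigr => i _.
  have hi := ltn_ord i.
  congr (M _ _); lia.
have e2 : S + S = N.+1%:R * b N.
  rewrite {2}e1 -big_split /=.
  rewrite (eq_bigr (fun _ => b N)) ?sumr_const ?card_ord ?mulr_natl //.
  move=> i _; have hi := ltn_ord i.
  have -> : (N.+1 - i.+1 + 0 = N - i)%N by lia.
  rewrite Msym; congr b; lia.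
rewrite -e2; ring.
Qed.

Lemma claim1 n : 2%:R * iota (r * Hq n) = (n%:R - 1) * b n.
Proof.
have -> : r * Hq n = Hq n - HWp n.+1 by rewrite HWpS /r; ring.
rewrite iotaB.
have -> : iota (Hq n) = - b n.
  rewrite /Hq iotaB iota_deriv !hornerM hornerr0 mul0r HWp0 mulr0 subrr.
  by rewrite /b sub0r.
rewrite mulrBr Rval; ring.
Qed.

Lemma bodd j : odd j -> b j.+2 = 0.
Proof.
move=> hj.
have e : b j.+2 = iota (U j.+2) by rewrite /U iota_comp.
rewrite UC in e.
have e2 : sg j.+1 * (r * Wq j.+1) = ((-1) ^+ j.+1)%:P * (Wq j.+1 - 'X * Wq j.+1).
  by rewrite /sg /r; ring.
rewrite e2 iotaCM iotaB iota_Wq Wp0 -WpS -/(b j.+2) oppr0 sub0r in e.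
rewrite -signr_odd /= hj /= expr0 mul1r in e.
have h2 : (2%:R : R) * b j.+2 = 0.
  transitivity (b j.+2 + b j.+2); first ring.
  by rewrite {1}e; ring.
by move/eqP: h2; rewrite mulf_eq0 pnatr_eq0 /= => /eqP.
Qed.

Lemma sg_val n : sg n = ((-1) ^+ n)%:P. Proof. by []. Qed.

Lemma claim2 n k : odd (n + k) ->
  2%:R * iota (r * Hq n * Wp k.+1) = (-1) ^+ n * n%:R * b (n + k.+1).
Proof.
move=> hodd.
have e1 : r * Hq n * Wp k.+1 =
   ((-1) ^+ n * n%:R)%:P * (U n * Wp k.+1) + ((-1) ^+ n)%:P * (V n.+1 * Wp k.+1).
  have h := BB n.
  have -> : r * Hq n = sg n * n%:R * U n - sg n.+1 * V n.+1 by rewrite -h; ring.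
  by rewrite sgS /sg polyCM polyC_natr; ring.
have e2 : iota (V n.+1 * Wp k.+1) = (-1) ^+ k * iota (r * Hq n * Wp k.+1).
  rewrite -iota_comp comp_polyM.
  have -> : V n.+1 \Po r = HWp n.+1 by rewrite /V -comp_polyA rr comp_polyXr.
  rewrite -/(U k.+1) UC HWpS WpS /sg -iotaCM; congr iota; ring.
have hs : (-1) ^+ n * (-1) ^+ k = -1 :> R.
  by rewrite -exprD -signr_odd hodd expr1.
set P := iota (r * Hq n * Wp k.+1).
have eP : P = (-1) ^+ n * n%:R * b (n + k.+1) - P.
  rewrite {1}/P e1 iotaD !iotaCM Jval e2 -/P mulrA hs mulN1r; ring.
transitivity (P + P); first ring.
by rewrite {2}eP; ring.
Qed.

Lemma iota_sum n (F : 'I_n -> {poly R}) : iota (\sum_(i < n) F i) = \sum_(i < n) iota (F i).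
Proof.
elim: n F => [|n IH] F; first by rewrite !big_ord0 iota0.
by rewrite !big_ord_recr /= iotaD IH.
Qed.

Lemma iota_natM (m : nat) p : iota (m%:R * p) = m%:R * iota p.
Proof. by rewrite -polyC_natr iotaCM. Qed.

Lemma deriv_sum_nat n (c : nat -> nat) (F : nat -> {poly R}) :
  \sum_(k < n) (c k)%:R * ('X * (r * F k)^`()) = 'X * (r * \sum_(k < n) (c k)%:R * F k)^`().
Proof.
elim: n => [|n IH]; first by rewrite !big_ord0 mulr0 deriv0 mulr0.
rewrite !big_ord_recr /= IH mulrDr derivD mulrDr.
congr (_ + _).
have -> : r * ((c n)%:R * F n) = (c n)%:R * (r * F n) by ring.
by rewrite (@derivcM (c n)%:R (r * F n) (dnat (c n))); ring.
Qed.

Lemma SN N : \sum_(k < N.+1) ('C(N, k))%:R * Wp k = sg N * U N.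
Proof.
elim: N => [|N IH].
  by rewrite big_ord1 /= bin0 mul1r /sg expr0 polyC1 mul1r /U /= -polyC1 comp_polyC.
rewrite big_ord_recl /=.
have e : \sum_(i < N.+1) ('C(N.+1, (lift ord0 i)))%:R * Wp (lift ord0 i)
   = \sum_(i < N.+1) ('C(N, i.+1))%:R * Wp i.+1 + \sum_(i < N.+1) ('C(N, i))%:R * Wp i.+1.
  by rewrite -big_split /=; apply: eq_bigr => i _; rewrite binS natrD mulrDl.
rewrite e addrA.
have eA : ('C(N.+1, 0))%:R * Wp 0 + \sum_(i < N.+1) ('C(N, i.+1))%:R * Wp i.+1 = sg N * U N.
  rewrite -IH.
  transitivity (\sum_(k < N.+2) ('C(N, k))%:R * Wp k).
    by rewrite [RHS]big_ord_recl !bin0.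
  by rewrite [LHS]big_ord_recr /= bin_small // mulr0n mul0r addr0.
rewrite eA.
have eB : \sum_(i < N.+1) ('C(N, i))%:R * Wp i.+1 = 'X * (r * (sg N * U N))^`().
  rewrite -IH -deriv_sum_nat; apply: eq_bigr => i _; by rewrite WpS.
rewrite eB.
have -> : r * (sg N * U N) = sg N * (r * U N) by ring.
rewrite derivcM ?dsg // UWq.
have -> : Wq N \Po r = - ('X * U N) ^`() by rewrite dXU opprK.
rewrite sgS !derivM derivX dr /r; ring.
Qed.

Lemma brec n : \sum_(k < n.+2) ('C(n.+2, k))%:R * b k = 0.
Proof.
have h : \sum_(i < n.+2) ('C(n.+2, i))%:R * Wp i + Wp n.+2 = sg n.+2 * U n.+2.
  by rewrite -(SN n.+2) [RHS]big_ord_recr binn mul1r.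
have e : \sum_(i < n.+2) ('C(n.+2, i))%:R * Wp i = - Wq n.+1.
  rewrite -(addrK (Wp n.+2) (\sum_(i < n.+2) _)) h UC WpS !sgS.
  have := sg2 n; rewrite /r => e2.
  transitivity (- (sg n * sg n) * (1 - 'X) * Wq n.+1 - 'X * Wq n.+1); first ring.
  by rewrite e2; ring.
have := congr1 iota e.
rewrite iotaN iota_Wq Wp0 !oppr0 iota_sum => h0.
rewrite -[RHS]h0.
by apply: eq_bigr => i _; rewrite iota_natM.
Qed.

Lemma b0 : b 0 = 1.
Proof. by rewrite /b /= -derivX iota_deriv !hornerX subr0. Qed.

Lemma sum_big (F : nat -> R) m : sum_n_m F 0 m = \sum_(k < m.+1) F k.
Proof.
elim: m => [|m IH]; first by rewrite sum_n_n big_ord1.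
rewrite sum_n_Sm; last by apply/leP.
by rewrite IH [RHS]big_ord_recr.
Qed.

Lemma binC n k : (k <= n)%N -> Binomial.C n k = ('C(n, k))%:R.
Proof.
move=> hk.
rewrite /Binomial.C !INRE !factE minusE RdivE -(bin_fact hk) !natrM mulfK //.
by rewrite mulf_neq0 // pnatr_eq0 -lt0n fact_gt0.
Qed.

Lemma bern_len m : List.length (bern_list m) = m.+1.
Proof.
elim: m => [|m IH] //=.
rewrite List.length_app IH /=; lia.
Qed.

Lemma bern_listS m : bern_list m.+1 = (bern_list m ++
  [:: - (INR m.+2)^-1 * sum_n_m (fun k => Binomial.C m.+2 k * List.nth k (bern_list m) 0) 0 m])%list.
Proof. by []. Qed.

Lemma bern_nth m k : (k <= m)%N -> List.nth k (bern_list m) 0%R = b k.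
Proof.
elim: m k => [|m IH] k hk.
  by move: hk; rewrite leqn0 => /eqP ->; rewrite /= b0.
rewrite bern_listS.
case: (ltnP k m.+1) => hkm.
  by rewrite List.app_nth1 ?bern_len; [exact: IH|apply/ltP].
have -> : k = m.+1 by apply/eqP; rewrite eqn_leq hk hkm.
rewrite List.app_nth2 bern_len; last by apply/leP.
rewrite Nat.sub_diag; cbn [List.nth]; rewrite INRE.
rewrite sum_big.
rewrite (eq_bigr (fun k : 'I_m.+1 => ('C(m.+2, k))%:R * b k)); last first.
  move=> i _; have hi := ltn_ord i.
  by rewrite binC ?IH //; lia.
have h := brec m.
rewrite big_ord_recr /= binSn in h.
set S := \sum_(i < m.+1) _ in h *.
have eS : S = - ((m.+2)%:R * b m.+1).
  by apply/eqP; rewrite -subr_eq0 opprK h.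
rewrite eS ?RmultE ?RoppE ?RinvE.
rewrite mulrN mulNr opprK mulKf //.
by rewrite pnatr_eq0.
Qed.

Lemma bernE n : bernoulli n = b n.
Proof. by rewrite /bernoulli bern_nth. Qed.

Definition cc n k := @GRing.mul R (stirling2 n k)%:R (k`!)%:R.

Lemma stir0 n k : (n < k)%N -> stirling2 n k = 0%N.
Proof.
elim: n k => [|n IH] [|k] //= h.
rewrite !IH //; lia.
Qed.

Lemma ccS n j : cc n.+1 j.+1 = (j.+1)%:R * (cc n j.+1 + cc n j).
Proof.
rewrite /cc.
have -> : stirling2 n.+1 j.+1 = (j.+1 * stirling2 n j.+1 + stirling2 n j)%N by [].
rewrite factS natrD !natrM; ring.
Qed.

Lemma coefW n k : (Wp n)`_k = cc n k * (-1) ^+ k.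
Proof.
elim: n k => [|n IH] k.
  rewrite /= coef1 /cc; case: k => [|k] /=; first by rewrite fact0 expr0; ring.
  by rewrite !mul0r.
rewrite /= coefXM; case: k => [|j] /=.
  by rewrite /cc /= !mul0r.
rewrite coef_deriv /r mulrBl mul1r coefB coefXM /= !IH ccS -mulr_natr exprS -natr1; ring.
Qed.

Lemma harmS j : harmonic j.+1 = harmonic j + (j.+1%:R)^-1.
Proof.
rewrite /harmonic sum_n_Sm; last by apply/leP.
by rewrite INRE.
Qed.

Lemma harm0 : harmonic 0 = 0.
Proof. by rewrite /harmonic sum_n_m_zero. Qed.

Lemma coefHW n k : (HWp n)`_k = cc n k * harmonic k * (-1) ^+ k.
Proof.
elim: n k => [|n IH] k.
  rewrite coef0 /cc; case: k => [|k] /=; first by rewrite harm0; ring.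
  by rewrite !mul0r.
rewrite /= coefXM; case: k => [|j] /=.
  by rewrite /cc /= !mul0r.
rewrite coefB coef_deriv /r mulrBl mul1r coefB coefXM /= !IH coefW ccS -mulr_natr exprS harmS -natr1.
field.
by rewrite natr1 pnatr_eq0.
Qed.

Lemma sizeW n : (size (Wp n) <= n.+1)%N.
Proof. by apply/leq_sizeP => j hj; rewrite coefW /cc stir0 // !mul0r. Qed.
Lemma sizeHW n : (size (HWp n) <= n.+1)%N.
Proof. by apply/leq_sizeP => j hj; rewrite coefHW /cc stir0 // !mul0r. Qed.

Lemma geomE n x : geom_poly n (- x) = (Wp n).[x].
Proof.
rewrite /geom_poly sum_big (horner_coef_wide _ (sizeW n)); apply: eq_bigr => i _.
by rewrite coefW /cc !RmultE !INRE factE RpowE RoppE (exprNn x); ring.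
Qed.

Lemma sum10 (a : nat -> R) n : a 0%N = 0 -> sum_n_m a 1 n = sum_n_m a 0 n.
Proof.
move=> h0; case: n => [|n]; first by rewrite sum_n_m_zero // sum_n_n h0.
rewrite [RHS]sum_Sn_m; last by apply/leP.
by rewrite h0 /Hierarchy.plus /= Rplus_0_l.
Qed.

Lemma harmE n x : harm_geom_poly n (- x) = (HWp n).[x].
Proof.
rewrite /harm_geom_poly sum10; last by rewrite harm0 !RmultE !mulr0 mul0r.
rewrite sum_big (horner_coef_wide _ (sizeHW n)); apply: eq_bigr => i _.
by rewrite coefHW /cc !RmultE !INRE factE RpowE RoppE (exprNn x); ring.
Qed.

Lemma hornerr x : r.[x] = 1 - x.
Proof. by rewrite /r hornerD hornerN hornerX -polyC1 hornerC. Qed.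

Lemma cancelx (x h : R) : x != 0 -> (1 - x) / x * (x * h) = (1 - x) * h.
Proof. by move=> hx; rewrite mulrA divfK. Qed.

Lemma IZR2 : IZR 2 = 2%:R.
Proof. by []. Qed.

Lemma two_neq0 : (2%:R : R) != 0.
Proof. by rewrite pnatr_eq0. Qed.

Lemma xneq0 x : Rlt (Rmin 0 1) x /\ Rlt x (Rmax 0 1) -> x != 0.
Proof.
move=> [h1 h2]; rewrite Rmin_left in h1; last by lra.
apply/eqP => h; rewrite h in h1; exact: (Rlt_irrefl _ h1).
Qed.

Lemma main1 n : RInt (fun x => (1 - x) / x * harm_geom_poly n.+1 (- x)) 0 1
   = pow (-1) n * ((INR n - 1) / IZR 2) * bernoulli n.
Proof.
have -> : RInt (fun x => (1 - x) / x * harm_geom_poly n.+1 (- x)) 0 1 = iota (r * Hq n).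
  rewrite /iota; apply: RInt_ext => x hx.
  rewrite harmE HWpS hornerM hornerX hornerM hornerr mulrA divfK //.
  exact: xneq0.
have h := claim1 n.
rewrite bernE RpowE INRE IZR2.
case: (boolP (odd n)) => hn.
  have key : (n%:R - 1) * b n = 0.
    case: n hn {h} => [|[|j]] //= hn; first by rewrite subrr mul0r.
    by rewrite bodd ?mulr0 //; move: hn; rewrite negbK.
  rewrite -signr_odd hn expr1.
  have -> : -1 * ((n%:R - 1) / 2%:R) * b n = - ((n%:R - 1) * b n) / 2%:R by ring.
  rewrite key oppr0 mul0r.
  rewrite key in h.
  by move/eqP: h; rewrite mulf_eq0 (negbTE two_neq0) /= => /eqP.
rewrite -signr_odd (negbTE hn) expr0 mul1r.
by apply: (mulfI two_neq0); rewrite h; field.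
Qed.

Lemma main2 n m : (1 <= m)%coq_nat -> Nat.Even (Nat.add n m) ->
  RInt (fun x => (1 - x) / x * harm_geom_poly n.+1 (- x) * geom_poly m (- x)) 0 1
   = pow (-1) n * (INR n / IZR 2) * bernoulli (Nat.add n m).
Proof.
case: m => [|k] hm; first by move/leP: hm.
move=> [p hp].
have hodd : odd (n + k).
  have e : (n + k).+1 = (2 * p)%N by rewrite -plusE; lia.
  have := congr1 odd e; rewrite /= oddM /= => /negbFE.
  by [].
have -> : RInt (fun x => (1 - x) / x * harm_geom_poly n.+1 (- x) * geom_poly k.+1 (- x)) 0 1
   = iota (r * Hq n * Wp k.+1).
  rewrite /iota; apply: RInt_ext => x hx.
  rewrite harmE geomE HWpS hornerM hornerX !hornerM hornerr cancelx //.
  exact: xneq0.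
have h := claim2 n k hodd.
rewrite plusE bernE RpowE INRE IZR2.
by apply: (mulfI two_neq0); rewrite h; field.
Qed.

End Dev.

Theorem theorem4 :
  (forall n : nat,
     RInt (fun x => (1 - x) / x * harm_geom_poly (S n) (- x)) 0 1
     = (-1) ^ n * ((INR n - 1) / 2) * bernoulli n)
  /\
  (forall n m : nat, (1 <= m)%nat -> Nat.Even (n + m) ->
     RInt (fun x => (1 - x) / x * harm_geom_poly (S n) (- x) * geom_poly m (- x)) 0 1
     = (-1) ^ n * (INR n / 2) * bernoulli (n + m)).
Proof.
  split.
  - intro n. exact (Dev.main1 n).
  - intros n m h1 h2. exact (Dev.main2 n m h1 h2).
Qed.
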